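(* Let $T=2^m$, $d\ge1$ and $u_{1:T}\in(\mathbb{R}^d)^T$, and let $P=\sum_{t=1}^{T-1}\|u_{t+1}-u_t\|_2$. Then for every scale $j^*\in[1:m]$, $P^{(j^* )}\le P$, where $P^{(j^* )}$ is defined in the context.
   Context: Haar features for $T=2^m$: for scale $j\in[1:m]$ and location $l\in[1:2^{-j}T]$, $h^{(j,l)}\in\mathbb{R}^T$ has $t$-th entry $1$ for $t\in[2^j(l-1)+1:2^j(l-1)+2^{j-1}]$, $-1$ for $t\in[2^j(l-1)+2^{j-1}+1:2^jl]$, and $0$ otherwise; normalized $\tilde h^{(j,l)}=2^{-j/2}h^{(j,l)}$. For $i\in[1:d]$, $u^{(i)}_{1:T}\in\mathbb{R}^T$ is the sequence of $i$-th coordinates of $u_1,\ldots,u_T$. Coefficient $\hat u^{(j,l)}\in\mathbb{R}^d$ has $i$-th entry $\langle\tilde h^{(j,l)},u^{(i)}_{1:T}\rangle$. Detail sequences: $z^{(j,l)}_t=\hat u^{(j,l)}\tilde h^{(j,l)}_t\in\mathbb{R}^d$. Path length of the $(j,l)$ detail within its support: $P^{(j,l)}=\sum_{t=2^j(l-1)+1}^{2^jl-1}\|z^{(j,l)}_{t+1}-z^{(j,l)}_t\|_2$, and $P^{(j)}=\sum_l P^{(j,l)}$. *)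

(* Defs.v *)
From mathcomp Require Import all_boot all_order all_algebra.
From mathcomp Require Import reals.
Set Implicit Arguments. Unset Strict Implicit. Unset Printing Implicit Defensive.
Import Order.TTheory GRing.Theory Num.Theory.
Local Open Scope ring_scope.

Section Haar.
Variable R : realType.
Variable d : nat.

(* Time indices are 1-based natural numbers t in [1:T]; the sequence
   u : nat -> 'rV[R]_d is only ever read at t in [1:T]. *)

Definition haar (j l t : nat) : R :=
  if ((2 ^ j * (l - 1)).+1 <= t <= 2 ^ j * (l - 1) + 2 ^ (j - 1))%N then 1
  else if ((2 ^ j * (l - 1) + 2 ^ (j - 1)).+1 <= t <= 2 ^ j * l)%N then -1
  else 0.

Definition haarn (j l t : nat) : R := (Num.sqrt (2 ^+ j))^-1 * haar j l t.

Definition norm2 (x : 'rV[R]_d) : R := Num.sqrt (\sum_(i < d) x 0 i ^+ 2).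

Definition haar_coef (T : nat) (u : nat -> 'rV[R]_d) (j l : nat) : 'rV[R]_d :=
  \row_(i < d) \sum_(1 <= t < T.+1) haarn j l t * u t 0 i.

Definition detail (T : nat) (u : nat -> 'rV[R]_d) (j l t : nat) : 'rV[R]_d :=
  haarn j l t *: haar_coef T u j l.

Definition path_jl (T : nat) (u : nat -> 'rV[R]_d) (j l : nat) : R :=
  \sum_((2 ^ j * (l - 1)).+1 <= t < 2 ^ j * l)
     norm2 (detail T u j l t.+1 - detail T u j l t).

Definition path_j (T : nat) (u : nat -> 'rV[R]_d) (j : nat) : R :=
  \sum_(1 <= l < (T %/ 2 ^ j).+1) path_jl T u j l.

Definition path_len (T : nat) (u : nat -> 'rV[R]_d) : R :=
  \sum_(1 <= t < T) norm2 (u t.+1 - u t).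

End Haar.

(* Main.v *)
Require Import Defs.
From mathcomp Require Import all_boot all_order all_algebra.
From mathcomp Require Import reals ring lra zify.
Import Order.TTheory GRing.Theory Num.Theory.
Local Open Scope ring_scope.

Section N.
Variable R : realType.
Variable d : nat.
Implicit Types x y : 'rV[R]_d.

Lemma norm2_ge0 x : 0 <= norm2 x.
Proof. exact: sqrtr_ge0. Qed.

Lemma sumsq_ge0 (x : 'rV[R]_d) : 0 <= \sum_(i < d) x 0 i ^+ 2.
Proof. by apply: sumr_ge0 => i _; exact: sqr_ge0. Qed.

Lemma expand_sq (a b : R) x y :
  \sum_(i < d) (a * x 0 i - b * y 0 i) ^+ 2 =
  a ^+ 2 * \sum_(i < d) x 0 i ^+ 2 - (2 * a * b) * \sum_(i < d) (x 0 i * y 0 i)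
  + b ^+ 2 * \sum_(i < d) y 0 i ^+ 2.
Proof.
rewrite !mulr_sumr -sumrB -big_split /=; apply: eq_bigr => i _; ring.
Qed.

Lemma CS x y : (\sum_(i < d) x 0 i * y 0 i) ^+ 2 <=
  (\sum_(i < d) x 0 i ^+ 2) * \sum_(i < d) y 0 i ^+ 2.
Proof.
set Sx := \sum_(i < d) x 0 i ^+ 2; set Sy := \sum_(i < d) y 0 i ^+ 2.
set Sxy := \sum_(i < d) x 0 i * y 0 i.
have Sy0 : 0 <= Sy by exact: sumsq_ge0.
have Sx0 : 0 <= Sx by exact: sumsq_ge0.
have [Sye|Syp] := eqVneq Sy 0.
  have yz : forall i, y 0 i = 0.
    move=> i; apply/eqP; rewrite -sqrf_eq0; apply/eqP.
    by have := psumr_eq0P (fun i _ => sqr_ge0 (y 0 i)) Sye; apply.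
  rewrite /Sxy (eq_bigr (fun _ => 0)); last by move=> i _; rewrite yz mulr0.
  by rewrite big1 // expr0n /= mulr_ge0.
have Sypos : 0 < Sy by rewrite lt_def Syp.
have := sumsq_ge0 (\row_i (Sy * x 0 i - Sxy * y 0 i)).
rewrite (eq_bigr (fun i => (Sy * x 0 i - Sxy * y 0 i) ^+ 2)); last by move=> i _; rewrite mxE.
rewrite expand_sq -/Sx -/Sy -/Sxy => H.
have : 0 <= Sy * (Sx * Sy - Sxy ^+ 2).
  by move: H; congr (_ <= _); ring.
rewrite pmulr_rge0 // subr_ge0 mulrC. by [].
Qed.

Lemma norm2D x y : norm2 (x + y) <= norm2 x + norm2 y.
Proof.
have h0 := norm2_ge0 x; have h1 := norm2_ge0 y.
rewrite -(ger0_norm (addr_ge0 h0 h1)) -sqrtr_sqr /norm2 ler_sqrt ?sqr_ge0 //.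
rewrite (eq_bigr (fun i => (1 * x 0 i - (-1) * y 0 i) ^+ 2)); last first.
  by move=> i _; rewrite !mxE; congr (_ ^+ 2); ring.
rewrite expand_sq sqrrD !sqr_sqrtr ?sumsq_ge0 //.
have cs : \sum_(i < d) x 0 i * y 0 i <= Num.sqrt (\sum_(i < d) x 0 i ^+ 2) * Num.sqrt (\sum_(i < d) y 0 i ^+ 2).
  rewrite -sqrtrM ?sumsq_ge0 //.
  apply: (le_trans (ler_norm _)).
  by rewrite -sqrtr_sqr ler_sqrt ?mulr_ge0 ?sumsq_ge0 // ?sqr_ge0 // CS.
move: cs; rewrite mulr_natl.
set a := \sum_(i < d) x 0 i * y 0 i.
set b := Num.sqrt _ * Num.sqrt _.
set X := \sum_(i < d) x 0 i ^+ 2; set Y := \sum_(i < d) y 0 i ^+ 2.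
move=> cs; rewrite expr1n expr2 !mul1r mulN1r mulrN opprK mulr2n. lra.
Qed.

Lemma norm2N x : norm2 (- x) = norm2 x.
Proof. by rewrite /norm2; congr Num.sqrt; apply: eq_bigr => i _; rewrite mxE sqrrN. Qed.

Lemma norm2Z (c : R) x : norm2 (c *: x) = `|c| * norm2 x.
Proof.
rewrite /norm2 -sqrtr_sqr -sqrtrM ?sqr_ge0 // mulr_sumr; congr Num.sqrt.
by apply: eq_bigr => i _; rewrite mxE exprMn.
Qed.

Lemma norm2_sum n (f : nat -> 'rV[R]_d) :
  norm2 (\sum_(k < n) f k) <= \sum_(k < n) norm2 (f k).
Proof.
elim: n => [|n IH]; first by rewrite !big_ord0 /norm2 big1 ?sqrtr0 // => i _; rewrite mxE expr0n.
rewrite !big_ord_recr /=; apply: (le_trans (norm2D _ _)); exact: lerD.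
Qed.

Lemma norm2_tele (u : nat -> 'rV[R]_d) p n :
  norm2 (u (p + n)%N - u p) <= \sum_(p <= t < p + n) norm2 (u t.+1 - u t).
Proof.
elim: n => [|n IH]; first by rewrite addn0 subrr big_geq // /norm2 big1 ?sqrtr0 // => i _; rewrite mxE expr0n.
rewrite addnS big_nat_recr ?leq_addr //=.
have -> : u (p + n).+1 - u p = (u (p + n).+1 - u (p+n)%N) + (u (p + n)%N - u p) by rewrite addrA subrK.
apply: (le_trans (norm2D _ _)); rewrite addrC; exact: lerD.
Qed.

Lemma sum_sub (f : nat -> R) a b c e : (forall t, 0 <= f t) -> (a <= b)%N -> (b <= c)%N -> (c <= e)%N ->
  \sum_(b <= t < c) f t <= \sum_(a <= t < e) f t.
Proof.
move=> f0 ab bc ce.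
rewrite (big_cat_nat ab (leq_trans bc ce)) (big_cat_nat bc ce) /=.
have g0 : forall x y : nat, 0 <= \sum_(x <= i < y) f i by move=> x y; apply: sumr_ge0 => *; exact: f0.
have := g0 a b; have := g0 c e; lra.
Qed.
End N.

Section H.
Variable R : realType.
Variable d : nat.

Lemma pow_split (j : nat) : (0 < j)%N -> (2 ^ j = 2 ^ (j - 1) + 2 ^ (j - 1))%N.
Proof. by case: j => // j _; rewrite subn1 /= expnS mul2n addnn. Qed.

Lemma haar_val (j l t : nat) : (0 < j)%N -> (0 < l)%N ->
  haar R j l t = if ((2 ^ j * (l - 1)) < t <= 2 ^ j * (l - 1) + 2 ^ (j - 1))%N then 1
   else if (2 ^ j * (l - 1) + 2 ^ (j - 1) < t <= 2 ^ j * (l - 1) + 2 ^ (j - 1) + 2 ^ (j - 1))%N then -1 else 0.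
Proof.
move=> j0 l0; rewrite /haar.
have -> : (2 ^ j * l = 2 ^ j * (l - 1) + 2 ^ (j - 1) + 2 ^ (j - 1))%N.
  by case: l l0 => // l _; rewrite -addnA -pow_split // subn1 /= mulnS addnC.
by [].
Qed.

Lemma sum_block (F g : nat -> R) a h T : (a + h + h <= T)%N ->
  (forall t, g t = if (a < t <= a + h)%N then 1 else if (a + h < t <= a + h + h)%N then -1 else 0) ->
  \sum_(1 <= t < T.+1) (g t * F t)
  = \sum_(k < h) (F (k + a.+1)%N - F (k + (a + h).+1)%N).
Proof.
move=> hT hg.
have e1 : (1 <= a.+1 <= T.+1)%N by lia.
have e2 : (a.+1 <= (a + h).+1 <= T.+1)%N by lia.
have e3 : ((a + h).+1 <= (a + h + h).+1 <= T.+1)%N by lia.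
case/andP: e1 => e1 e1'; case/andP: e2 => e2 e2'; case/andP: e3 => e3 e3'.
rewrite (big_cat_nat e1 e1') (big_cat_nat e2 e2') (big_cat_nat e3 e3') /=.
have B1 : \sum_(1 <= t < a.+1) (g t * F t) = 0.
  by rewrite big_nat_cond big1 // => t /andP[ht _]; rewrite hg ifF ?ifF ?mul0r //; lia.
have B4 : \sum_((a + h + h).+1 <= t < T.+1) (g t * F t) = 0.
  by rewrite big_nat_cond big1 // => t /andP[ht _]; rewrite hg ifF ?ifF ?mul0r //; lia.
have B2 : \sum_(a.+1 <= t < (a + h).+1) (g t * F t) = \sum_(a.+1 <= t < (a + h).+1) F t.
  by apply: eq_big_nat => t ht; rewrite hg ifT ?mul1r //; lia.
have B3 : \sum_((a + h).+1 <= t < (a + h + h).+1) (g t * F t) = \sum_((a + h).+1 <= t < (a + h + h).+1) - F t.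
  by apply: eq_big_nat => t ht; rewrite hg ifF ?ifT ?mulN1r //; lia.
rewrite B1 B2 B3 B4 add0r addr0 sumrN.
have S : forall b, \sum_(b.+1 <= t < (b + h)%N.+1) F t = \sum_(k < h) F (k + b.+1)%N.
  move=> b; rewrite -{1}(add0n b.+1) big_addn big_mkord.
  by have -> : ((b + h).+1 - b.+1 = h)%N by lia.
rewrite (S a) (S (a + h)%N).
by rewrite sumrB.
Qed.

Lemma block_path (g : nat -> R) (v : 'rV[R]_d) s a h : (0 < h)%N -> 0 <= s ->
  (forall t, g t = if (a < t <= a + h)%N then 1 else if (a + h < t <= a + h + h)%N then -1 else 0) ->
  \sum_(a.+1 <= t < a + h + h) norm2 ((s * g t.+1) *: v - (s * g t) *: v) = 2 * s * norm2 v.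
Proof.
move=> h0 s0 hg.
have e1 : (a.+1 <= a + h)%N by lia.
have e2 : (a + h <= (a + h).+1)%N by lia.
have e3 : ((a + h).+1 <= a + h + h)%N by lia.
rewrite (big_cat_nat e1 (leq_trans e2 e3)) (big_cat_nat e2 e3) /= big_nat1.
have Z : forall t, g t.+1 = g t -> norm2 ((s * g t.+1) *: v - (s * g t) *: v) = 0.
  move=> t ->; rewrite subrr /norm2 big1 ?sqrtr0 // => i _; rewrite mxE expr0n.
  by [].
have B1 : \sum_(a.+1 <= t < a + h) norm2 ((s * g t.+1) *: v - (s * g t) *: v) = 0.
  rewrite big_nat_cond big1 // => t /andP[ht _]; apply: Z.
  rewrite !hg ifT; last by lia.
  by rewrite ifT //; lia.
have B3 : \sum_((a + h).+1 <= t < a + h + h) norm2 ((s * g t.+1) *: v - (s * g t) *: v) = 0.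
  rewrite big_nat_cond big1 // => t /andP[ht _]; apply: Z.
  rewrite !hg ifF; last by lia.
  rewrite ifT; last by lia.
  rewrite ifF; last by lia.
  by rewrite ifT //; lia.
rewrite B1 B3 add0r addr0.
rewrite -scalerBl norm2Z !hg ifF; last by lia.
rewrite ifT; last by lia.
rewrite ifT; last by lia.
congr (_ * _); rewrite mulrN1 mulr1 -opprD normrN ger0_norm; first by ring.
by rewrite addr_ge0.
Qed.

Lemma haar_coefE T (u : nat -> 'rV[R]_d) j l : (0 < j)%N -> (0 < l)%N -> (2 ^ j * l <= T)%N ->
  haar_coef T u j l = (Num.sqrt (2 ^+ j))^-1 *:
    \sum_(k < (2 ^ (j - 1))%N) (u (k + (2 ^ j * (l - 1)).+1)%N - u (k + (2 ^ j * (l - 1) + 2 ^ (j - 1)).+1)%N).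
Proof.
move=> j0 l0 hT; apply/rowP => i; rewrite /haar_coef mxE [RHS]mxE summxE.
under [X in _ = _ * X]eq_bigr do rewrite !mxE.
rewrite (eq_bigr (fun t => (Num.sqrt (2 ^+ j))^-1 * (haar R j l t * u t 0 i))); last by move=> t _; rewrite /haarn mulrA.
rewrite -mulr_sumr; congr (_ * _).
apply: sum_block; last by move=> t; rewrite haar_val.
move: hT; have -> : (2 ^ j * l = 2 ^ j * (l - 1) + 2 ^ (j - 1) + 2 ^ (j - 1))%N.
  by case: l l0 => // l _; rewrite -addnA -pow_split // subn1 /= mulnS addnC.
by [].
Qed.

Lemma path_jl_le T (u : nat -> 'rV[R]_d) j l : (0 < j)%N -> (0 < l)%N -> (2 ^ j * l <= T)%N ->
  path_jl T u j l <= \sum_((2 ^ j * (l - 1)).+1 <= t < 2 ^ j * l) norm2 (u t.+1 - u t).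
Proof.
move=> j0 l0 hT.
have el : (2 ^ j * l = 2 ^ j * (l - 1) + 2 ^ (j - 1) + 2 ^ (j - 1))%N.
  by case: l l0 {hT} => // l _; rewrite -addnA -pow_split // subn1 /= mulnS addnC.
rewrite /path_jl /detail haar_coefE // el.
set a := (2 ^ j * (l - 1))%N; set h := (2 ^ (j - 1))%N.
set s := (Num.sqrt (2 ^+ j))^-1.
set w := \sum_(k < h) _.
have s0 : 0 <= s by rewrite invr_ge0 sqrtr_ge0.
rewrite (eq_bigr (fun t => norm2 ((s * haar R j l t.+1) *: (s *: w) - (s * haar R j l t) *: (s *: w)))); last by [].
rewrite (block_path (haar R j l)) ?expn_gt0 //; last by move=> t; rewrite haar_val.
rewrite norm2Z ger0_norm //.
set B := \sum_(a.+1 <= t < a + h + h) _.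
have B0 : 0 <= B by apply: sumr_ge0 => t _; exact: norm2_ge0.
have Nw : norm2 w <= h%:R * B.
  apply: (le_trans (@norm2_sum _ _ h (fun k => u (k + a.+1)%N - u (k + (a + h).+1)%N))).
  have -> : h%:R * B = \sum_(k < h) B by rewrite sumr_const card_ord mulr_natl.
  apply: ler_sum => k _.
  rewrite -opprB norm2N.
  have -> : (k + (a + h).+1 = (k + a.+1) + h)%N by lia.
  apply: (le_trans (norm2_tele _ _ _ _ _)); apply: sum_sub; first by move=> t; exact: norm2_ge0.
  - by lia.
  - by lia.
  - have := ltn_ord k; lia.
have ss : 2 * s * s * h%:R = 1.
  rewrite /s /h; case: j j0 {el hT s s0 w Nw B B0 a h} => // j _.
  rewrite subn1 /= natrX.
  have q : (Num.sqrt (2 ^+ j.+1 : R))^-1 * (Num.sqrt (2 ^+ j.+1))^-1 = (2 ^+ j.+1)^-1.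
    by rewrite -invfM -expr2 sqr_sqrtr // exprn_ge0.
  rewrite -(mulrA 2) q exprS.
  by field; rewrite expf_neq0 // pnatr_eq0.
apply: (le_trans (y := 2 * s * (s * (h%:R * B)))).
  by rewrite ler_wpM2l ?mulr_ge0 // ler_wpM2l.
by rewrite !mulrA ss mul1r.
Qed.

Lemma blocks (D : nat -> R) j N : (forall t, 0 <= D t) ->
  \sum_(1 <= l < N.+1) \sum_((2 ^ j * (l - 1)).+1 <= t < 2 ^ j * l) D t <= \sum_(1 <= t < 2 ^ j * N) D t.
Proof.
move=> D0; elim: N => [|N IH]; first by rewrite big_geq // muln0 big_geq.
rewrite big_nat_recr //= subn1 /=.
case: N IH => [|N] IH.
  by rewrite big_geq // add0r muln0.
have e1 : (1 <= 2 ^ j * N.+1)%N by rewrite muln_gt0 expn_gt0.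
have e2 : (2 ^ j * N.+1 <= 2 ^ j * N.+2)%N by rewrite leq_mul2l leqnSn orbT.
rewrite (big_cat_nat e1 e2) /=.
apply: lerD => //.
case: (ltnP (2 ^ j * N.+1) (2 ^ j * N.+2)) => h; last by rewrite [X in X <= _]big_geq ?(leq_trans h) //; apply: sumr_ge0 => *; exact: D0.
rewrite (big_ltn h) lerDr //.
Qed.
End H.

Theorem lemma7 (R : realType) (m d : nat) (u : nat -> 'rV[R]_d) (j : nat) :
  (0 < d)%N -> (1 <= j <= m)%N ->
  path_j (2 ^ m) u j <= path_len (2 ^ m) u.
Proof.
move=> _ /andP[j0 jm].
have eN : (2 ^ j * (2 ^ m %/ 2 ^ j) = 2 ^ m)%N by rewrite mulnC divnK // dvdn_exp2l.
have -> : path_len (2 ^ m) u = \sum_(1 <= t < (2 ^ j * (2 ^ m %/ 2 ^ j))%N) norm2 (u t.+1 - u t) by rewrite eN.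
rewrite /path_j.
have hb := @blocks R (fun t => norm2 (u t.+1 - u t)) j (2 ^ m %/ 2 ^ j) (fun t => norm2_ge0 _ _ _).
apply: (le_trans _ hb).


rewrite big_nat_cond [X in _ <= X]big_nat_cond; apply: ler_sum => l /andP[/andP[l1 l2] _].
apply: path_jl_le => //.
by rewrite -eN leq_mul2l -ltnS l2 orbT.
Qed.
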